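(* Let $\omega\colon\mathbf Z_+\to(0,+\infty)$ be a weight which is bounded from below. Then $\mathrm{span}[h_m(\mu,\cdot);\ m\ge0,\ \mu\in\mathbf D]$ is dense in $\mathcal X_\omega$. In particular, for $\omega=\omega_0$ with $\omega_0(n)=(n+1)/\pi$, the set $\{h_m(\mu,\cdot);\ m\ge0,\ \mu\in\mathbf D\}$ spans a dense subspace of $\mathcal X_{\omega_0}$.
   Context: $\mathbf D$ is the open unit disk. $\mathcal X_\omega$ is the Hilbert space of holomorphic functions $f(z)=\sum_{n\ge3}c_nz^n$ on $\mathbf D$ with $\|f\|_\omega^2=\sum_{n\ge3}|c_n|^2/\omega(n)<\infty$ (the quotient of the weighted Bergman space $\mathcal B^2_\omega$ by $\mathrm{span}[1,z,z^2]$). For $\mu\in\mathbf C$ and $m\ge1$, $h_m(\mu,z)=\sum_{n\ge0}\mu^n(z^{(6m+4)2^n}-z^{(2m+1)2^n})$, and $h_0(\mu,z)=\sum_{n\ge0}\mu^nz^{2^{n+2}}$; when $\omega$ is bounded from below these belong to $\mathcal X_\omega$ for $\mu\in\mathbf D$. *)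

(* Defs.v *)
From HB Require Import structures.
From mathcomp Require Import all_boot all_order all_algebra.
From mathcomp Require Import all_classical all_reals all_analysis.
From mathcomp Require Import complex.
Set Implicit Arguments. Unset Strict Implicit. Unset Printing Implicit Defensive.
Import Order.TTheory GRing.Theory Num.Theory.
Import numFieldNormedType.Exports.
Local Open Scope ring_scope.
Local Open Scope complex_scope.
Notation normc := ComplexField.Normc.normc.

(* Holomorphic functions on D are represented by their Taylor coefficient
   sequences c : nat -> R[i]  (f(z) = sum_n c n z^n). *)

(* Coefficient at index k of the lacunary series  sum_{n>=0} mu^n z^(a 2^n)  (a >= 1). *)
Definition lac_coef (R : rcfType) (a : nat) (mu : R[i]) (k : nat) : R[i] :=
  \sum_(n < k.+1 | (a * 2 ^ n)%N == k) mu ^+ n.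

(* Taylor coefficients of h_m(mu, .) :
   h_0(mu,z) = sum_n mu^n z^(2^(n+2)),
   h_m(mu,z) = sum_n mu^n (z^((6m+4)2^n) - z^((2m+1)2^n))  for m >= 1. *)
Definition h_coef (R : rcfType) (m : nat) (mu : R[i]) (k : nat) : R[i] :=
  if m is 0 then lac_coef 4 mu k
  else lac_coef (6 * m + 4) mu k - lac_coef (2 * m + 1) mu k.

Definition wnorm2 (R : realType) (omega : nat -> R) (c : nat -> R[i]) : \bar R :=
  (\sum_(0 <= n <oo) ((normc (c n) ^+ 2 / omega n)%:E))%E.

(* f belongs to X_omega: f is holomorphic on the unit disk (its Taylor series
   converges absolutely on D), c_0 = c_1 = c_2 = 0, and ||f||_omega < oo. *)
Definition in_X (R : realType) (omega : nat -> R) (c : nat -> R[i]) : Prop :=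
  [/\ (forall r : R, 0 <= r < 1 -> cvgn (series (fun n => (normc (c n) * r ^+ n : R)))),
      (forall n, (n < 3)%N -> c n = 0)
    & (wnorm2 omega c < +oo)%E].

Definition in_span_h (R : realType) (g : nat -> R[i]) : Prop :=
  exists (N : nat) (a : 'I_N -> R[i]) (m : 'I_N -> nat) (mu : 'I_N -> R[i]),
    (forall i, normc (mu i) < 1) /\
    forall k, g k = \sum_(i < N) a i * h_coef (m i) (mu i) k.

Definition span_h_dense (R : realType) (omega : nat -> R) : Prop :=
  forall f : nat -> R[i], in_X omega f ->
  forall eps : R, 0 < eps ->
  exists g : nat -> R[i], in_span_h g /\ (wnorm2 omega (fun k => (f k - g k)%R) < eps%:E)%E.

Definition weight_bdd_below (R : realType) (omega : nat -> R) : Prop :=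
  (forall n, 0 < omega n) /\ exists delta : R, 0 < delta /\ forall n, delta <= omega n.

(* Main.v *)
Require Import Defs.
From HB Require Import structures.
From mathcomp Require Import all_boot all_order all_algebra.
From mathcomp Require Import all_classical all_reals all_analysis.
From mathcomp Require Import complex.
Import Order.TTheory GRing.Theory Num.Theory.
Import numFieldNormedType.Exports.
Local Open Scope ring_scope.
From mathcomp Require Import ring lra.

Section Span.
Variable R : realType.
Local Notation C := (R[i]).
Local Notation seqC := (nat -> C).

Lemma span_add (g h : seqC) : in_span_h g -> in_span_h h ->
  in_span_h (fun k => g k + h k).
Proof.
move=> [N [a [m [mu [Hmu Hg]]]]] [M [b [m' [mu' [Hmu' Hh]]]]].
exists (N + M)%N.
exists (fun i => match fintype.split i with inl j => a j | inr j => b j end).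
exists (fun i => match fintype.split i with inl j => m j | inr j => m' j end).
exists (fun i => match fintype.split i with inl j => mu j | inr j => mu' j end).
split.
  by move=> i; case: (fintype.split i).
move=> k; rewrite big_split_ord /= Hg Hh.
congr (_ + _); apply: eq_bigr => i _.
  by rewrite -[lshift M i]/(unsplit (inl i)) unsplitK.
by rewrite -[rshift N i]/(unsplit (inr i)) unsplitK.
Qed.

Lemma span_scale (c : C) (g : seqC) : in_span_h g -> in_span_h (fun k => c * g k).
Proof.
move=> [N [a [m [mu [Hmu Hg]]]]].
exists N, (fun i => c * a i), m, mu; split => // k.
by rewrite Hg mulr_sumr; apply: eq_bigr => i _; rewrite mulrA.
Qed.

Lemma span_h (m : nat) (mu : C) : normc mu < 1 -> in_span_h (fun k => h_coef m mu k).
Proof.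
move=> Hmu; exists 1%N, (fun _ => 1), (fun _ => m), (fun _ => mu); split => // k.
by rewrite big_ord1 mul1r.
Qed.

Lemma span_0 : in_span_h (fun _ => 0 : C).
Proof.
by exists 0%N, (fun _ => 0), (fun _ => 0%N), (fun _ => 0); split => [[]//|k]; rewrite big_ord0.
Qed.
End Span.

Section Approx.
Local Open Scope complex_scope.
Variable R : realType.
Local Notation C := (R[i]).
Local Notation seqC := (nat -> C).
Variable omega : nat -> R.
Hypothesis om_pos : forall n, 0 < omega n.
Variable delta : R.
Hypothesis delta_pos : 0 < delta.
Hypothesis delta_le : forall n, delta <= omega n.

Lemma normc_ge0 (z : C) : 0 <= normc z.
Proof. by case: z => a b; exact: sqrtr_ge0. Qed.

Definition tm (x : seqC) n : R := normc (x n) ^+ 2 / omega n.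
Definition pw (x : seqC) N : R := \sum_(0 <= n < N) tm x n.

Lemma tm_ge0 x n : 0 <= tm x n.
Proof. by rewrite /tm divr_ge0 ?sqr_ge0 // ltW. Qed.

Lemma pw_ge0 x N : 0 <= pw x N.
Proof. by rewrite /pw sumr_ge0 // => i _; exact: tm_ge0. Qed.

Lemma pw_le_wn x N : ((pw x N)%:E <= wnorm2 omega x)%E.
Proof.
rewrite /pw -sumEFin /wnorm2.
by apply: nneseries_lim_ge => n _ _; rewrite lee_fin; exact: tm_ge0.
Qed.

Lemma wn_le x (B : R) : (forall N, pw x N <= B) -> (wnorm2 omega x <= B%:E)%E.
Proof.
move=> HB; apply: lime_le.
  by apply: is_cvg_nneseries => n _ _; rewrite lee_fin divr_ge0 ?sqr_ge0 // ltW.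
by apply: nearW => N; rewrite sumEFin lee_fin; exact: HB.
Qed.

Lemma wn_ge0 x : (0 <= wnorm2 omega x)%E.
Proof. by apply: nneseries_ge0 => n _ _; rewrite lee_fin divr_ge0 ?sqr_ge0 // ltW. Qed.

Lemma wn_lt x (e : R) : (wnorm2 omega x < e%:E)%E ->
  exists e', e' < e /\ forall N, pw x N <= e'.
Proof.
move=> He.
have fin : wnorm2 omega x \is a fin_num.
  by rewrite ge0_fin_numE ?wn_ge0 // (lt_trans He) ?ltry.
exists (fine (wnorm2 omega x)); split.
  by rewrite -lte_fin fineK.
by move=> N; rewrite -lee_fin fineK //; exact: pw_le_wn.
Qed.

Lemma nc2D (y z : C) : normc (y + z) ^+ 2 <= 2 * normc y ^+ 2 + 2 * normc z ^+ 2.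
Proof.
have H1 := le_normcD y z; have H2 := normc_ge0 (y + z); have H3 := normc_ge0 y;
have H4 := normc_ge0 z.
have H5 : normc (y + z) ^+ 2 <= (normc y + normc z) ^+ 2.
  by rewrite ler_pXn2r // ?nnegrE //; apply: addr_ge0.
have H6 := sqr_ge0 (normc y - normc z).
nra.
Qed.

Lemma pw_add x y z N : (forall k, x k = y k + z k) ->
  pw x N <= 2 * pw y N + 2 * pw z N.
Proof.
move=> Hx; rewrite /pw !mulr_sumr -big_split /=; apply: ler_sum => n _.
rewrite /tm Hx; have := nc2D (y n) (z n); have := om_pos n.
move=> /[dup] Ho; rewrite -invr_gt0 => Hi.
set u := normc _ ^+ 2; set v := normc _ ^+ 2; set w := normc _ ^+ 2.
rewrite /u /v /w; nra.
Qed.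

Lemma bound2 x y z (a b : R) : (forall k, x k = y k + z k) ->
  (wnorm2 omega y < a%:E)%E -> (wnorm2 omega z < b%:E)%E ->
  (wnorm2 omega x < (2 * a + 2 * b)%:E)%E.
Proof.
move=> Hx /wn_lt [a' [Ha' Hy]] /wn_lt [b' [Hb' Hz]].
apply: (le_lt_trans (@wn_le _ (2 * a' + 2 * b') _)).
  move=> N; apply: (le_trans (pw_add _ _ _ N Hx)).
  by have := Hy N; have := Hz N; lra.
by rewrite lte_fin; lra.
Qed.

Lemma pw_scale (c : C) x N : pw (fun k => c * x k) N = normc c ^+ 2 * pw x N.
Proof.
rewrite /pw mulr_sumr; apply: eq_bigr => n _.
by rewrite /tm ComplexField.Normc.normcM exprMn mulrA.
Qed.

Definition app (x : seqC) := forall e : R, 0 < e ->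
  exists g, in_span_h g /\ (wnorm2 omega (fun k => (x k - g k)%R) < e%:E)%E.

Lemma wn0 : wnorm2 omega (fun _ => 0 : C) = 0%E.
Proof.
apply/le_anti; rewrite wn_ge0 andbT; apply: wn_le => N.
rewrite /pw big1 // => n _; by rewrite /tm ComplexField.Normc.normc0 expr0n /= mul0r.
Qed.

Lemma app_span g : in_span_h g -> app g.
Proof.
move=> Hg e He; exists g; split => //.
by rewrite (_ : (fun k => _) = fun _ => 0) ?wn0 ?lte_fin //; apply: funext => k; rewrite subrr.
Qed.

Lemma app_add x y : app x -> app y -> app (fun k => x k + y k).
Proof.
move=> Hx Hy e He.
have [g [Sg Hg]] := Hx (e / 8) ltac:(by rewrite divr_gt0).
have [h [Sh Hh]] := Hy (e / 8) ltac:(by rewrite divr_gt0).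
exists (fun k => g k + h k); split; first exact: span_add.
apply: (lt_trans (bound2 _ _ _ _ _ _ Hg Hh)); first by move=> k /=; ring.
by rewrite lte_fin; lra.
Qed.

Lemma app_scale (c : C) x : app x -> app (fun k => c * x k).
Proof.
move=> Hx e He.
have Hc : 0 < normc c ^+ 2 + 1 by have := sqr_ge0 (normc c); lra.
have [g [Sg Hg]] := Hx (e / (normc c ^+ 2 + 1)) ltac:(by rewrite divr_gt0).
exists (fun k => c * g k); split; first exact: span_scale.
have [e' [He' Hp]] := wn_lt _ _ Hg.
apply: (le_lt_trans (@wn_le _ (normc c ^+ 2 * e') _)).
  move=> N; rewrite (_ : (fun k => _) = fun k => c * (x k - g k)); last first.
    by apply: funext => k; rewrite mulrBr.
  rewrite pw_scale; apply: ler_wpM2l; [exact: sqr_ge0 | exact: Hp].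
rewrite lte_fin.
have H0 : 0 <= e' by apply: le_trans (Hp 0%N); exact: pw_ge0.
rewrite ltr_pdivlMr // in He'.
have := sqr_ge0 (normc c); nra.
Qed.

Lemma app_lim x : (forall e : R, 0 < e -> exists y, app y /\
  (wnorm2 omega (fun k => (x k - y k)%R) < e%:E)%E) -> app x.
Proof.
move=> H e He.
have [y [Ay Hy]] := H (e / 8) ltac:(by rewrite divr_gt0).
have [g [Sg Hg]] := Ay (e / 8) ltac:(by rewrite divr_gt0).
exists g; split => //.
apply: (lt_trans (bound2 _ _ _ _ _ _ Hy Hg)); first by move=> k /=; ring.
by rewrite lte_fin; lra.
Qed.


Lemma sum_ind (a N : nat) : \sum_(0 <= k < N) ((k == a)%:R : R) = ((a < N)%N)%:R.
Proof.
elim: N => [|N IH]; first by rewrite big_geq.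
rewrite big_nat_recr //= IH ltnS.
case: (ltngtP a N) => H.
- by rewrite /= ?addr0 ?add0r.
- by rewrite /= ?addr0 ?add0r.
- by rewrite /= ?addr0 ?add0r.
Qed.

Lemma nc2_sum_uniq (f : nat -> nat) (c : nat -> C) (k M : nat) :
  (forall i j, f i = f j -> i = j) ->
  normc (\sum_(0 <= i < M) c i * ((k == f i)%:R)) ^+ 2 =
  \sum_(0 <= i < M) normc (c i) ^+ 2 * ((k == f i)%:R).
Proof.
move=> finj.
case: (boolP (has (fun i => k == f i) (index_iota 0 M))).
  move=> /hasP [i0 Hi0 /eqP Hk].
  rewrite (bigD1_seq i0) //= ?iota_uniq // [in RHS](bigD1_seq i0) //= ?iota_uniq //.
  rewrite Hk eqxx !mulr1 big1 ?big1 ?addr0 //.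
    by move=> i Hi; rewrite (_ : (f i0 == f i) = false) ?mulr0 //; apply/eqP => /finj H; rewrite H eqxx in Hi.
  by move=> i Hi; rewrite (_ : (f i0 == f i) = false) ?mulr0 //; apply/eqP => /finj H; rewrite H eqxx in Hi.
move=> /hasPn H.
rewrite big_seq_cond big1; last by move=> i /andP [/H /negbTE -> _]; rewrite mulr0.
rewrite [in RHS]big_seq_cond big1; last by move=> i /andP [/H /negbTE -> _]; rewrite mulr0.
by rewrite ComplexField.Normc.normc0 expr0n.
Qed.

Lemma pw_W (f : nat -> nat) (c : nat -> C) (x : seqC) N M :
  (forall i j, f i = f j -> i = j) ->
  (forall k, (k < N)%N -> x k = \sum_(0 <= i < M) c i * ((k == f i)%:R)) ->
  pw x N <= delta^-1 * \sum_(0 <= i < M) normc (c i) ^+ 2.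
Proof.
move=> finj Hx.
apply: (@le_trans _ _ (\sum_(0 <= k < N) delta^-1 *
    \sum_(0 <= i < M) normc (c i) ^+ 2 * ((k == f i)%:R))).
  rewrite /pw big_nat_cond [X in _ <= X]big_nat_cond.
  apply: ler_sum => k /andP [/andP [_ Hk] _].
  rewrite /tm Hx // nc2_sum_uniq // mulrC.
  apply: ler_wpM2r.
    by apply: sumr_ge0 => i _; rewrite mulr_ge0 ?sqr_ge0 ?ler0n.
  by rewrite lef_pV2 ?posrE // ?delta_le.
rewrite -mulr_sumr; apply: ler_wpM2l; first by rewrite invr_ge0 ltW.
rewrite exchange_big_nat /=; apply: ler_sum => i _.
rewrite -mulr_sumr -[X in _ <= X]mulr1; apply: ler_wpM2l; first exact: sqr_ge0.
rewrite (eq_bigr (fun k => ((k == f i)%:R : R))) ?sum_ind ?lern1 ?leq_b1 //.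
Qed.


Lemma app_zero : app (fun _ => 0).
Proof. exact/app_span/span_0. Qed.

Lemma app_sum (F : nat -> seqC) n : (forall j, (j < n)%N -> app (F j)) ->
  app (fun k => \sum_(0 <= j < n) F j k).
Proof.
elim: n => [|n IH] H.
  rewrite (_ : (fun k => _) = fun _ => (0 : C)); first exact: app_zero.
  by apply: funext => k; rewrite big_geq.
rewrite (_ : (fun k => _) = fun k => \sum_(0 <= j < n) F j k + F n k); last first.
  by apply: funext => k; rewrite big_nat_recr.
apply: app_add; first by apply: IH => j Hj; apply: H; rewrite ltnS ltnW.
exact: H.
Qed.

Lemma app_ext x y : (forall k, x k = y k) -> app x -> app y.
Proof. by move=> H; rewrite (funext H). Qed.

Lemma normcR (r : R) : normc (r%:C) = `|r|.
Proof. by rewrite /= expr0n /= addr0 sqrtr_sqr. Qed.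

Lemma extract (Y : C -> seqC) (X : nat -> seqC) (K : R) : 0 <= K ->
  (forall mu, normc mu < 1 -> in_span_h (Y mu)) ->
  (forall n t, 0 < t -> t <= 1/2 -> forall N,
     pw (fun k => ((t%:C) ^+ n)^-1 * (Y (t%:C) k -
          \sum_(0 <= j < n.+1) (t%:C) ^+ j * X j k)) N <= K * t ^+ 2) ->
  forall n, app (X n).
Proof.
move=> K0 HY HT.
have core : forall n, (forall j, (j < n)%N -> app (X j)) -> app (X n).
  move=> n Hlt; apply: app_lim => e He.
  pose t := Num.min (1/2) (e / (2 * (K + 1))).
  have t1 : t <= 1/2 by rewrite /t ge_min lexx.
  have t2 : t <= e / (2 * (K + 1)) by rewrite /t ge_min lexx orbT.
  have t0 : 0 < t by rewrite /t lt_min divr_gt0 //= divr_gt0 // mulr_gt0 //; lra.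
  pose mu := t%:C.
  have mu0 : mu != 0 by rewrite /mu fmorph_eq0 gt_eqF.
  have mun0 : mu ^+ n != 0 by rewrite expf_neq0.
  exists (fun k => (mu ^+ n)^-1 * (Y mu k - \sum_(0 <= j < n) mu ^+ j * X j k)).
  split.
    apply: app_scale.
    apply: (@app_ext (fun k => Y mu k + (-1) * \sum_(0 <= j < n) mu ^+ j * X j k)).
      by move=> k; rewrite mulN1r.
    apply: app_add.
      apply: app_span; apply: HY; rewrite normcR ger0_norm ?ltW //; lra.
    apply: app_scale.
    apply: (app_sum (fun j k => mu ^+ j * X j k)) => j Hj.
    exact/app_scale/Hlt.
  rewrite (_ : (fun k => _) = (fun k => (-1) * (((t%:C) ^+ n)^-1 * (Y (t%:C) k -
          \sum_(0 <= j < n.+1) (t%:C) ^+ j * X j k)))); last first.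
    apply: funext => k; rewrite big_nat_recr //= -/mu.
    by field.
  apply: (le_lt_trans (@wn_le _ (K * t ^+ 2) _)).
    move=> N; rewrite pw_scale normcN ComplexField.Normc.normc1 expr1n mul1r.
    exact: HT.
  rewrite lte_fin.
  have h1 : t * (2 * (K + 1)) <= e by rewrite -ler_pdivlMr // mulr_gt0 //; lra.
  have h2 : t ^+ 2 <= t by rewrite expr2 ger_pMl //; lra.
  have h3 : K * t ^+ 2 <= K * t by rewrite ler_wpM2l.
  nra.
suff H : forall n j, (j <= n)%N -> app (X j).
  by move=> m; apply: (H m m); exact: leqnn.
elim => [|n IH] j Hj.
  by move: Hj; rewrite leqn0 => /eqP ->; apply: core.
move: Hj; rewrite leq_eqVlt => /orP [/eqP ->|Hj].
  by apply: core => i Hi; apply: IH.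
by apply: IH.
Qed.


Lemma normcX (z : C) k : normc (z ^+ k) = normc z ^+ k.
Proof.
elim: k => [|k IH]; first by rewrite !expr0 ComplexField.Normc.normc1.
by rewrite !exprS ComplexField.Normc.normcM IH.
Qed.

Lemma lac_ext a (mu : C) k M : (0 < a)%N -> (k < M)%N ->
  lac_coef a mu k = \sum_(0 <= i < M) mu ^+ i * (((k == a * 2 ^ i)%N)%:R).
Proof.
move=> a0 kM.
have E : lac_coef a mu k = \sum_(0 <= i < k.+1) mu ^+ i * (((k == a * 2 ^ i)%N)%:R).
  rewrite /lac_coef big_mkcond big_mkord; apply: eq_bigr => i _.
  by rewrite eq_sym; case: eqP => _; rewrite ?mulr1 ?mulr0.
rewrite E -(subnK kM); elim: (M - k.+1)%N => [|d IH]; first by rewrite add0n.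
rewrite addSn [in RHS]big_nat_recr //= -IH.
rewrite (_ : (k == a * 2 ^ (d + k.+1))%N = false) ?mulr0 ?addr0 //.
apply/negbTE; rewrite neq_ltn; apply/orP; left.
apply: (@leq_trans (d + k.+1)%N); first by rewrite leq_addl.
apply: (@leq_trans (2 ^ (d + k.+1))%N); first exact/ltnW/ltn_expl.
exact: leq_pmull.
Qed.

Lemma geo (r : R) K : 0 <= r -> r <= 1/2 -> \sum_(0 <= i < K) r ^+ i <= 2.
Proof.
move=> r0 r1; elim: K => [|K IH]; first by rewrite big_geq //; lra.
rewrite big_nat_recl // expr0.
rewrite (eq_bigr (fun i => r * r ^+ i)); last by move=> i _; rewrite exprS.
rewrite -mulr_sumr.
have : 0 <= \sum_(0 <= i < K) r ^+ i by apply: sumr_ge0 => i _; exact: exprn_ge0.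
nra.
Qed.

Lemma lacT a n t N : (0 < a)%N -> 0 < t -> t <= 1/2 ->
  pw (fun k => ((t%:C) ^+ n)^-1 * (lac_coef a (t%:C) k -
      \sum_(0 <= j < n.+1) (t%:C) ^+ j * (((k == a * 2 ^ j)%N)%:R))) N
  <= (delta^-1 * 2) * t ^+ 2.
Proof.
move=> a0 t0 t1.
pose M := (N + n.+1)%N. pose mu := t%:C.
have mu0 : mu != 0 by rewrite /mu fmorph_eq0 gt_eqF.
have nM : (n.+1 <= M)%N by rewrite leq_addl.
apply: le_trans (pw_W (fun i => a * 2 ^ i)%N
   (fun i => if (n < i)%N then mu ^+ (i - n) else 0) _ N M _ _) _.
- move=> i j /eqP; rewrite eqn_pmul2l // eqn_exp2l // => /eqP; done.
- move=> k Hk; rewrite (lac_ext _ _ _ M) //; last by rewrite ltn_addr.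
  have Hs : \sum_(0 <= i < M) mu ^+ i * (((k == a * 2 ^ i)%N)%:R : C) = \sum_(0 <= i < n.+1) mu ^+ i * (((k == a * 2 ^ i)%N)%:R : C)
     + \sum_(n.+1 <= i < M) mu ^+ i * (((k == a * 2 ^ i)%N)%:R : C) by apply: big_cat_nat.
  rewrite -/mu Hs addrAC subrr add0r.
  have Hs2 : \sum_(0 <= i < M) (if (n < i)%N then mu ^+ (i - n) else 0) * (((k == a * 2 ^ i)%N)%:R : C) =
     \sum_(0 <= i < n.+1) (if (n < i)%N then mu ^+ (i - n) else 0) * (((k == a * 2 ^ i)%N)%:R : C)
     + \sum_(n.+1 <= i < M) (if (n < i)%N then mu ^+ (i - n) else 0) * (((k == a * 2 ^ i)%N)%:R : C)
     by apply: big_cat_nat.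
  rewrite Hs2.
  rewrite [X in _ = X + _]big_nat_cond [X in _ = X + _]big1 ?add0r; last first.
    by move=> i /andP [/andP [_ Hi] _]; rewrite ltnNge -ltnS Hi mul0r.
  rewrite mulr_sumr big_nat_cond [in RHS]big_nat_cond; apply: eq_bigr.
  move=> i /andP [/andP [Hi _] _]; rewrite Hi (expfB _ Hi).
  by rewrite mulrA [_ ^- n * _]mulrC.
rewrite -mulrA ler_pM2l ?invr_gt0 //.
rewrite (big_cat_nat (leq0n n.+1) nM) /= big_nat_cond big1 ?add0r; last first.
  move=> i /andP [/andP [_ Hi] _]; rewrite ltnNge -ltnS Hi.
  by rewrite ComplexField.Normc.normc0 expr0n.
rewrite -{1}(add0n n.+1) big_addn.
rewrite (eq_bigr (fun i => t ^+ 2 * (t ^+ 2) ^+ i)); last first.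
  move=> i _; rewrite ifT; last by rewrite addnS ltnS leq_addl.
  rewrite addnS subSn ?leq_addl // addnK.
  rewrite normcX /mu normcR ger0_norm ?ltW //.
  rewrite -!exprM -exprD; congr (_ ^+ _); by rewrite mulSn [(2 * i)%N]mulnC.
rewrite -mulr_sumr mulrC ler_pM2r ?exprn_gt0 //.
apply: geo; first exact: sqr_ge0.
rewrite expr2; apply: (le_trans (ler_wpM2l (ltW t0) t1)); lra.
Qed.


Definition em (k : nat) : seqC := fun x => (((x == k)%N)%:R : C).

Lemma app_pow j : app (em (4 * 2 ^ j)).
Proof.
apply: (extract (fun mu k => h_coef 0 mu k) (fun i => em (4 * 2 ^ i)) (delta^-1 * 2)).
- by rewrite mulr_ge0 // invr_ge0 ltW.
- by move=> mu Hmu; exact: span_h.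
- by move=> n t t0 t1 N; exact: (lacT 4 n t N).
Qed.

Lemma app_odd p j : (0 < p)%N ->
  app (fun x => em ((6 * p + 4) * 2 ^ j) x - em ((2 * p + 1) * 2 ^ j) x).
Proof.
case: p => [//|p] _; move: j.
apply: (extract (fun mu k => h_coef p.+1 mu k)
  (fun i x => em ((6 * p.+1 + 4) * 2 ^ i) x - em ((2 * p.+1 + 1) * 2 ^ i) x)
  (4 * (delta^-1 * 2))) => //.
- by rewrite mulr_ge0 // mulr_ge0 // invr_ge0 ltW.
- by move=> mu Hmu; exact: span_h.
move=> n t t0 t1 N.
pose a := (6 * p.+1 + 4)%N. pose b := (2 * p.+1 + 1)%N.
apply: le_trans (pw_add _
  (fun k => ((t%:C) ^+ n)^-1 * (lac_coef a (t%:C) k -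
      \sum_(0 <= j < n.+1) (t%:C) ^+ j * (((k == a * 2 ^ j)%N)%:R)))
  (fun k => (-1) * (((t%:C) ^+ n)^-1 * (lac_coef b (t%:C) k -
      \sum_(0 <= j < n.+1) (t%:C) ^+ j * (((k == b * 2 ^ j)%N)%:R)))) N _) _.
  move=> k /=; rewrite /em.
  rewrite (eq_bigr (fun j => (t%:C) ^+ j * (((k == a * 2 ^ j)%N)%:R) -
     (t%:C) ^+ j * (((k == b * 2 ^ j)%N)%:R))); last by move=> j _; rewrite mulrBr.
  rewrite sumrB /a /b; ring.
rewrite (pw_scale (-1)) normcN ComplexField.Normc.normc1 expr1n mul1r.
have Ha := lacT a n t N erefl t0 t1.
have Hb := lacT b n t N erefl t0 t1.
lra.
Qed.


Definition s (k : nat) : nat := (3 * k + 2 ^ logn 2 k)%N.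

Lemma step k : (3 <= k)%N -> app (fun x => em k x - em (s k) x).
Proof.
move=> k3.
have k0 : (0 < k)%N by apply: leq_trans k3.
have [m cm Hk] := pfactor_coprime (isT : prime 2) k0.
rewrite coprime2n in cm.
have Es : s k = (3 * k + 2 ^ logn 2 k)%N by [].
rewrite Es; move: Hk; set v := logn 2 k => Hk.
have Hm : m = (m./2 * 2 + 1)%N.
  by rewrite -[m in LHS]odd_double_half cm -mul2n mulnC addnC.
case: (posnP m./2) => Hp.
  rewrite Hp /= in Hm.
  have v2 : (2 <= v)%N.
    rewrite leqNgt; apply/negP => Hv; move: k3; rewrite Hk Hm mul1n.
    by case: v Hv {Hk} => [|[|]].
  have E1 : k = (4 * 2 ^ (v - 2))%N.
    by rewrite Hk Hm mul1n -[in LHS](subnKC v2) expnD.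
  have E2 : (3 * k + 2 ^ v)%N = (4 * 2 ^ v)%N.
    by rewrite Hk Hm mul1n; ring.
  rewrite E2 E1.
  apply: (@app_ext (fun x => em (4 * 2 ^ (v - 2)) x + (-1) * em (4 * 2 ^ v) x)).
    by move=> x; rewrite mulN1r.
  by apply: app_add; [exact: app_pow | apply: app_scale; exact: app_pow].
set p := m./2 in Hm Hp.
have E1 : k = ((2 * p + 1) * 2 ^ v)%N by rewrite Hk Hm [(p * 2)%N]mulnC.
have E2 : (3 * k + 2 ^ v)%N = ((6 * p + 4) * 2 ^ v)%N by rewrite E1; ring.
rewrite E2 E1.
apply: (@app_ext (fun x => (-1) * (em ((6 * p + 4) * 2 ^ v) x - em ((2 * p + 1) * 2 ^ v) x))).
  by move=> x; rewrite mulN1r opprB.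
by apply: app_scale; exact: app_odd.
Qed.

Lemma s_gt k : (k < s k)%N.
Proof.
rewrite /s; have := expn_gt0 2 (logn 2 k); rewrite /= => H.
apply: (@leq_trans (3 * k).+1); first by rewrite ltnS leq_pmull.
by rewrite -addn1 leq_add2l.
Qed.

Lemma iter_ge k j : (k <= iter j s k)%N.
Proof.
elim: j => [//|j IH]; rewrite iterS; apply: leq_trans IH _; exact/ltnW/s_gt.
Qed.

Lemma iter_lt k i j : (i < j)%N -> (iter i s k < iter j s k)%N.
Proof.
elim: j => [//|j IH]; rewrite ltnS leq_eqVlt => /orP [/eqP ->|H].
  by rewrite iterS s_gt.
by rewrite iterS; apply: ltn_trans (IH H) _; exact: s_gt.
Qed.

Lemma iter_inj k i j : iter i s k = iter j s k -> i = j.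
Proof.
move=> H; case: (ltngtP i j) => // Hij.
  by have := iter_lt k _ _ Hij; rewrite H ltnn.
by have := iter_lt k _ _ Hij; rewrite H ltnn.
Qed.

Lemma chain k j : (3 <= k)%N -> app (fun x => em k x - em (iter j.+1 s k) x).
Proof.
move=> k3; elim: j => [|j IH]; first exact: step.
have h3 : (3 <= iter j.+1 s k)%N by apply: leq_trans k3 (iter_ge _ _).
apply: (@app_ext (fun x => (em k x - em (iter j.+1 s k) x) +
   (em (iter j.+1 s k) x - em (s (iter j.+1 s k)) x))).
  by move=> x; rewrite [iter j.+2 s k]iterS addrA subrK.
by apply: app_add => //; exact: step.
Qed.


Lemma app_em k : (3 <= k)%N -> app (em k).
Proof.
move=> k3; apply: app_lim => e He.
pose L := (Num.bound (delta^-1 / e)).+1.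
have L0 : (L%:R : C) != 0 by rewrite pnatr_eq0.
have L0R : (0 : R) < L%:R by rewrite ltr0n.
exists (fun x => (L%:R)^-1 * \sum_(0 <= j < L) (em k x - em (iter j.+1 s k) x)).
split.
  apply: app_scale.
  apply: (app_sum (fun j x => em k x - em (iter j.+1 s k) x)) => j _.
  exact: chain.
apply: (le_lt_trans (@wn_le _ (delta^-1 * (L%:R)^-1) _)).
  move=> N.
  apply: le_trans (pw_W (fun j => iter j.+1 s k) (fun _ => (L%:R)^-1) _ N L _ _) _.
  - by move=> i j /iter_inj [].
  - move=> x _; rewrite /em sumrB sumr_const_nat subn0 -[_ *+ L]mulr_natr -mulr_sumr.
    by field.
  rewrite sumr_const_nat subn0 ComplexField.Normc.normcV.
  have -> : (L%:R : C) = (L%:R : R)%:C by rewrite rmorph_nat.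
  rewrite normcR ger0_norm ?ler0n //.
  apply: ler_wpM2l; first by rewrite invr_ge0 ltW.
  rewrite -[_ *+ L]mulr_natr le_eqVlt; apply/orP; left; apply/eqP; field.
  by rewrite gt_eqF.
rewrite lte_fin.
have Hb := @archi_boundP _ (delta^-1 / e) ltac:(by rewrite divr_ge0 ?invr_ge0 ?ltW).
have HL : (Num.bound (delta^-1 / e))%:R < (L%:R : R) by rewrite ltr_nat.
have : delta^-1 / e < L%:R by apply: lt_trans HL.
rewrite ltr_pdivrMr // => H1.
rewrite ltr_pdivrMr //.
by rewrite mulrC.
Qed.


Lemma trunc_eq (f : seqC) K x :
  \sum_(0 <= i < K) f i * em i x = if (x < K)%N then f x else 0.
Proof.
elim: K => [|K IH]; first by rewrite big_geq.
rewrite big_nat_recr //= IH /em ltnS.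
case: (ltngtP x K) => H /=.
- by rewrite mulr0 addr0.
- by rewrite mulr0 addr0.
- by rewrite H mulr1 add0r.
Qed.

Lemma app_f f : in_X omega f -> app f.
Proof.
move=> [_ f012 Hf].
have fin : wnorm2 omega f \is a fin_num by rewrite ge0_fin_numE ?wn_ge0.
pose S := fine (wnorm2 omega f).
have pwS : forall N, pw f N <= S by move=> N; rewrite -lee_fin /S fineK //; exact: pw_le_wn.
apply: app_lim => e He.
have [K HK] : exists K, S - e / 2 < pw f K.
  case: (pselect (exists K, S - e / 2 < pw f K)) => // Hn; exfalso.
  have : (wnorm2 omega f <= (S - e / 2)%:E)%E.
    apply: wn_le => N; rewrite leNgt; apply/negP => H; apply: Hn; exists N; exact: H.
  rewrite -(fineK fin) lee_fin -/S; lra.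
exists (fun x => \sum_(0 <= i < K) f i * em i x); split.
  apply: (app_sum (fun i x => f i * em i x)) => i _.
  case: (ltnP i 3) => Hi.
    rewrite f012 //; apply: (@app_ext (fun _ => 0)); last exact: app_zero.
    by move=> x; rewrite mul0r.
  by apply: app_scale; exact: app_em.
pose G x := if (x < K)%N then 0 else tm f x.
have G0 : forall x, 0 <= G x by move=> x; rewrite /G; case: ifP => // _; exact: tm_ge0.
apply: (le_lt_trans (@wn_le _ (S - pw f K) _)); last by rewrite lte_fin; lra.
move=> N.
have -> : pw (fun x => f x - \sum_(0 <= i < K) f i * em i x) N = \sum_(0 <= x < N) G x.
  apply: eq_bigr => x _; rewrite /tm trunc_eq /G; case: ifP => _.
    by rewrite subrr ComplexField.Normc.normc0 expr0n mul0r.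
  by rewrite subr0.
apply: (@le_trans _ _ (\sum_(0 <= x < N + K) G x)).
  rewrite (@big_cat_nat _ _ _ N 0 (N + K)) ?leq_addr //= lerDl.
  by apply: sumr_ge0 => x _; exact: G0.
rewrite (@big_cat_nat _ _ _ K 0 (N + K)) ?leq_addl //=.
rewrite big_nat_cond big1 ?add0r; last first.
  by move=> x /andP [/andP [_ H] _]; rewrite /G H.
have := pwS (N + K)%N.
rewrite /pw (@big_cat_nat _ _ _ K 0 (N + K)) ?leq_addl //=.
have -> : \sum_(K <= x < N + K) G x = \sum_(K <= x < N + K) tm f x.
  rewrite big_nat_cond [in RHS]big_nat_cond; apply: eq_bigr.
  by move=> x /andP [/andP [H _] _]; rewrite /G ltnNge H.
lra.
Qed.

End Approx.

Theorem theorem2p4 (R : realType) :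
  (forall omega : nat -> R, weight_bdd_below omega -> span_h_dense omega) /\
  span_h_dense (fun n : nat => n.+1%:R / (pi : R)).
Proof.
have H : forall omega : nat -> R, weight_bdd_below omega -> span_h_dense omega.
  move=> omega [Hpos [delta [Hd Hle]]] f Hf e He.
  exact: (@app_f R omega Hpos delta Hd Hle f Hf e He).
split => //; apply: H; split.
  by move=> n; rewrite divr_gt0 ?ltr0n // pi_gt0.
exists (pi^-1); split; first by rewrite invr_gt0 pi_gt0.
move=> n; rewrite mulrC -[X in X <= _]mulr1 ler_pM2l ?invr_gt0 ?pi_gt0 //.
by rewrite ler1n.
Qed.
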